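(* Let $d\ge 2$ and $C_1>0$. There exist constants $C_2>1$, $c\in(0,1)$ and $0<c'\le C'$, depending only on $d$ and $C_1$, such that the following holds for every finite field $\mathbb F_q$ of characteristic greater than two. Let $E,F\subset\mathbb F_q^d$ and $0\le\beta\le1$, and assume $\max_{x\in\mathbb F_q^d\setminus\{0\}}|E\cap l_x|\le C_1q^{\beta}$. If $|E||F|\ge C_2q^{d+\beta}$, then there exists a set $E_0\subset E$ with $c'q^{-\beta}|E|\le|E_0|\le C'q^{-\beta}|E|$ such that $|\Pi(E_0,F)|\ge c\,q$.
   Context: $\mathbb F_q$ is a finite field with $q$ elements and characteristic greater than two; $\mathbb F_q^*=\mathbb F_q\setminus\{0\}$. For $x\in\mathbb F_q^d\setminus\{0\}$, $l_x=\{sx: s\in\mathbb F_q^*\}$. For $E,F\subset\mathbb F_q^d$, $\Pi(E,F)=\{x\cdot y: x\in E,\ y\in F\}$ with $x\cdot y=\sum_i x_iy_i$. *)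

(* Defs.v *)
From Stdlib Require Import Reals.
From mathcomp Require Import all_boot all_order all_algebra.
Set Implicit Arguments. Unset Strict Implicit. Unset Printing Implicit Defensive.
Import GRing.Theory.
Local Open Scope ring_scope.

Definition dotv (K : fieldType) (d : nat) (x y : 'rV[K]_d) : K :=
  \sum_(i < d) x 0 i * y 0 i.

Definition linex (K : finFieldType) (d : nat) (x : 'rV[K]_d) : {set 'rV[K]_d} :=
  [set s *: x | s in [set s : K | s != 0]].

Definition prodset (K : finFieldType) (d : nat) (E F : {set 'rV[K]_d}) : {set K} :=
  [set dotv x y | x in E, y in F].

Definition char_gt2 (K : finFieldType) : Prop :=
  exists p : nat, p \in [pchar K] /\ is_true (leq 3 p).

(* Main.v *)
Require Import Defs.
From Stdlib Require Import Reals ZArith Lra Lia.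
From mathcomp Require Import all_boot all_order all_algebra.
From mathcomp Require Import zify.
Set Implicit Arguments. Unset Strict Implicit. Unset Printing Implicit Defensive.
Import GRing.Theory.

Section Dot.
Variable K : finFieldType.
Variable d : nat.
Local Open Scope ring_scope.
Implicit Types x y z : 'rV[K]_d.

Lemma dotvC x y : dotv x y = dotv y x.
Proof. by rewrite /dotv; apply: eq_bigr => i _; rewrite mulrC. Qed.

Lemma dotvDr x y z : dotv x (y + z) = dotv x y + dotv x z.
Proof. by rewrite /dotv -big_split; apply: eq_bigr => i _; rewrite mxE mulrDr. Qed.

Lemma dotvNr x y : dotv x (- y) = - dotv x y.
Proof. by rewrite /dotv -sumrN; apply: eq_bigr => i _; rewrite mxE mulrN. Qed.

Lemma dotvBr x y z : dotv x (y - z) = dotv x y - dotv x z.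
Proof. by rewrite dotvDr dotvNr. Qed.

Lemma dotvDl x y z : dotv (y + z) x = dotv y x + dotv z x.
Proof. by rewrite dotvC dotvDr !(dotvC x). Qed.

Lemma dotvBl x y z : dotv (y - z) x = dotv y x - dotv z x.
Proof. by rewrite dotvC dotvBr !(dotvC x). Qed.

Lemma dotvZl s x y : dotv (s *: x) y = s * dotv x y.
Proof. by rewrite /dotv mulr_sumr; apply: eq_bigr => i _; rewrite mxE mulrA. Qed.

Lemma dotv_delta i z : dotv (delta_mx 0 i) z = z 0 i.
Proof.
rewrite /dotv (bigD1 i) //= big1 => [|j ji]; first by rewrite !mxE !eqxx mul1r addr0.
by rewrite !mxE (negbTE ji) andbF mul0r.
Qed.
End Dot.


Lemma card_part (T J : finType) (A : {pred T}) (Q : {pred J}) (g : T -> J) :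
  (forall x, x \in A -> g x \in Q) ->
  (\sum_(j in Q) #|[set x in A | g x == j]| = #|A|)%N.
Proof.
move=> hg; rewrite -sum1_card (partition_big g (mem Q)) //.
apply: eq_bigr => j _; rewrite -sum1_card; apply: eq_bigl => x; by rewrite inE.
Qed.

Section Fib.
Variable K : finFieldType.
Variable d : nat.
Local Open Scope ring_scope.

Lemma fiber_card (z : 'rV[K]_d) t : z != 0 ->
  #|[set v | dotv v z == t]| = #|[set v | dotv v z == 0]|.
Proof.
move=> zn0.
have : ~~ [forall i, z 0 i == 0].
  apply: contra zn0 => /forallP h; apply/eqP/rowP => i; rewrite mxE; exact/eqP/h.
rewrite negb_forall => /existsP [i hi].
pose w : 'rV[K]_d := (t / z 0 i) *: delta_mx 0 i.
have hw : dotv w z = t by rewrite dotvZl dotv_delta mulfVK.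
have -> : [set v | dotv v z == t] = [set v + w | v in [set v | dotv v z == 0]].
  apply/setP => v; rewrite inE; apply/idP/imsetP.
    move=> /eqP hv; exists (v - w); last by rewrite subrK.
    by rewrite inE dotvBl hv hw subrr.
  by move=> [u]; rewrite inE => /eqP hu ->; rewrite dotvDl hu hw add0r.
by rewrite card_imset //; apply: addIr.
Qed.

End Fib.
Section Fib2.
Variable K : finFieldType.
Variable d : nat.
Local Open Scope ring_scope.
Lemma ker_card (z : 'rV[K]_d.+1) : z != 0 ->
  #|[set v | dotv v z == 0]| = (#|K| ^ d)%N.
Proof.
move=> zn0.
have h := @card_part _ _ [pred v : 'rV[K]_d.+1 | true] [pred t : K | true]
   (fun v => dotv v z) (fun _ _ => isT).
have e : forall t, #|[set x in [pred v : 'rV[K]_d.+1 | true] | dotv x z == t]| =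
                   #|[set v | dotv v z == 0]|.
  move=> t; rewrite -(fiber_card (d:=d.+1) t zn0); apply: eq_card => v; by rewrite !inE.
rewrite (eq_bigr _ (fun t _ => e t)) sum_nat_const in h.
have hK : #|[pred v : 'rV[K]_d.+1 | true]| = (#|K| ^ d.+1)%N.
  by have := card_mx K 1 d.+1; rewrite mul1n => <-; apply: eq_card.
rewrite hK expnS in h.
have q0 : (0 < #|K|)%N by apply/card_gt0P; exists 0.
apply/eqP; rewrite -(eqn_pmul2l q0) -h; apply/eqP; congr (_ * _)%N.

Qed.
End Fib2.


Lemma amgm (a b : nat) : (2 * (a * b) <= a ^ 2 + b ^ 2)%N.
Proof. have [h _] := nat_AGM2 a b; move: h; rewrite sqrnD; lia. Qed.

Lemma csn (T : finType) (P : {pred T}) (g : T -> nat) :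
  ((\sum_(t in P) g t) ^ 2 <= #|P| * \sum_(t in P) g t ^ 2)%N.
Proof.
rewrite -(leq_pmul2l (isT : 0 < 2)%N).
have -> : ((\sum_(t in P) g t) ^ 2 = \sum_(s in P) \sum_(t in P) g s * g t)%N.
  by rewrite expnS expn1 big_distrl /=; apply: eq_bigr => s _; rewrite big_distrr.
have -> : (2 * (#|P| * \sum_(t in P) g t ^ 2) =
     \sum_(s in P) \sum_(t in P) (g s ^ 2 + g t ^ 2))%N.
  rewrite [RHS](eq_bigr (fun s => #|P| * g s ^ 2 + \sum_(t in P) g t ^ 2)%N); last first.
    by move=> s _; rewrite big_split /= sum_nat_const.
  by rewrite big_split /= sum_nat_const -big_distrr /= mul2n -addnn.
rewrite big_distrr /=; apply: leq_sum => s _; rewrite big_distrr /=.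
by apply: leq_sum => t _; apply: amgm.
Qed.


Section Core.
Variable K : finFieldType.
Variable d : nat.
Variable F : {set 'rV[K]_d.+1}.
Local Notation q := #|K|.
Local Notation f := #|F|.

Definition Qc (v : 'rV[K]_d.+1) : nat :=
  \sum_(y in F) \sum_(y' in F) (dotv v y == dotv v y').

Definition nc (v : 'rV[K]_d.+1) (t : K) : nat := #|[set y in F | dotv v y == t]|.


Lemma card_sumb (T : finType) (A : {pred T}) (p : pred T) :
  #|[set y in A | p y]| = \sum_(y in A) (p y : nat).
Proof.
rewrite -sum1_card [LHS]big_mkcond [RHS]big_mkcond /=.
apply: eq_bigr => y _; rewrite inE; by case: (y \in A); case: (p y).
Qed.

Lemma Q_sq v : Qc v = \sum_t nc v t ^ 2.
Proof.
rewrite /nc; under eq_bigr do rewrite card_sumb expnS expn1 big_distrl /=.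
under eq_bigr do under eq_bigr do rewrite big_distrr /=.
rewrite exchange_big /=; apply: eq_bigr => y _.
rewrite exchange_big /=; apply: eq_bigr => y' _.
rewrite (bigD1 (dotv v y)) //= big1 => [|t ht]; first by rewrite eqxx mul1n addn0 eq_sym.
by rewrite eq_sym (negbTE ht).
Qed.

Lemma nc_total v : \sum_t nc v t = f.
Proof.
rewrite -(@card_part _ _ F [pred t : K | true] (dotv v)) //.
Qed.

Lemma Q_ge v : (f ^ 2 <= q * Qc v)%N.
Proof.
have := csn (mem [pred t : K | true]) (nc v).
by rewrite Q_sq -(nc_total v).
Qed.

Lemma Q_geP (P : {set K}) v : (forall y, y \in F -> dotv v y \in P) ->
  (f ^ 2 <= #|P| * Qc v)%N.
Proof.
move=> hP; have := csn (mem P) (nc v).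
have e : forall t, t \notin P -> nc v t = 0%N.
  move=> t tP; apply/eqP; rewrite cards_eq0; apply/eqP/setP => y; rewrite !inE.
  apply/negP => /andP [yF /eqP ht]; by move: tP; rewrite -ht hP.
have -> : (\sum_(t in P) nc v t = f)%N.
  by rewrite -(@card_part _ _ F P (dotv v)).
move=> h; apply: leq_trans h _; rewrite leq_mul2l; apply/orP; right.
rewrite Q_sq [X in (_ <= X)%N](bigID (mem P)) /=; exact: leq_addr.
Qed.

Lemma Q_scale s v : s != 0%R -> Qc (s *: v) = Qc v.
Proof.
move=> s0; rewrite /Qc; apply: eq_bigr => y _; apply: eq_bigr => y' _.
by rewrite !dotvZl (inj_eq (mulfI s0)).
Qed.

Lemma sumQ : (\sum_v Qc v = f * (q ^ d.+1 + f.-1 * q ^ d))%N.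
Proof.
rewrite /Qc exchange_big /=.
rewrite -sum_nat_const; apply: eq_bigr => y yF.
rewrite exchange_big /=.
have h : forall y', (\sum_v (dotv v y == dotv v y') = if y == y' then q ^ d.+1 else q ^ d)%N.
  move=> y'; have := card_sumb (mem [pred v : 'rV[K]_d.+1 | true]) (fun v => dotv v y == dotv v y').
  move=> <-.
  case: eqP => [<-|/eqP ne].
    have := card_mx K 1 d.+1; rewrite mul1n => <-; apply: eq_card => v; by rewrite !inE eqxx.
  rewrite -(ker_card (z := y - y')); last by rewrite subr_eq0.
  by apply: eq_card => v; rewrite !inE dotvBr subr_eq0.
under eq_bigr do rewrite h.
rewrite (bigD1 y) //= eqxx; congr (_ + _)%N.
rewrite (eq_bigr (fun _ => q ^ d)%N); last by move=> y' /andP [_ ne]; rewrite eq_sym (negbTE ne).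
rewrite sum_nat_const; congr (_ * _)%N.
rewrite [in RHS](cardD1 y) yF /= add0n; apply: eq_card => z; by rewrite !inE andbC.
Qed.
End Core.


Lemma arith (r M g e A B P c : nat) :
  (1 <= r)%N -> (0 < M)%N ->
  (g.+1 * ((r.+1 * M) + g * M) = r * A + B)%N ->
  (c * g.+1 ^ 2 <= r.+1 * B)%N ->
  (c + r * e = r.+1 * M)%N ->
  (e * g.+1 ^ 2 <= P * A)%N ->
  (r.+1 * M <= e * g.+1)%N -> (r.+1 <= 2 * P)%N.
Proof.
move=> r1 M0 hT hB hc hP hef.
set f := g.+1 in hT hB hP hef *.
set N := (r.+1 * M)%N in hT hc hef *.
have K1 : (r.+1 * (f * (N + g * M)) = r * (f * N) + f * (f * N))%N.
  by rewrite /f /N; nia.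
have K2 : (r.+1 * (r * A + B) = r * (r.+1 * A) + r.+1 * B)%N by nia.
have K3 : (c * f ^ 2 + r * (e * f ^ 2) = f * (f * N))%N.
  by rewrite -hc; nia.
have h1 : (r * (r.+1 * A) <= r * (f * N + e * f ^ 2))%N.
  have := congr1 (muln r.+1) hT; rewrite K1 K2 => E1.
  rewrite mulnDr; lia.
rewrite leq_pmul2l // in h1.
have h2 : (f * N <= e * f ^ 2)%N.
  by rewrite expnS expn1 mulnA (mulnC f) leq_mul2r hef orbT.
have h3 : (r.+1 * (e * f ^ 2) <= (2 * P) * (e * f ^ 2))%N.
  have : (r.+1 * (e * f ^ 2) <= r.+1 * (P * A))%N by rewrite leq_mul2l hP orbT.
  have : (P * (r.+1 * A) <= P * (2 * (e * f ^ 2)))%N by rewrite leq_mul2l; apply/orP; right; lia.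
  rewrite !mulnA (mulnC P r.+1) (mulnC (P * 2)) (mulnC 2 P); lia.
have e0 : (0 < e)%N.
  have : (0 < e * f)%N by apply: leq_trans hef; rewrite muln_gt0 M0.
  by rewrite muln_gt0 => /andP [].
rewrite leq_pmul2r // in h3; by rewrite muln_gt0 e0 expn_gt0.
Qed.

Lemma core (K : finFieldType) d (E0 F : {set 'rV[K]_d.+1}) :
  (forall x, x \in E0 -> x != 0%R) ->
  (forall x y s, x \in E0 -> y \in E0 -> s != 0%R -> y = (s *: x)%R -> y = x) ->
  (#|K| ^ d.+1 <= #|E0| * #|F|)%N ->
  (#|K| <= 2 * #|prodset E0 F|)%N.
Proof.
move=> nz dir big.
set q := #|K|.
have q2 : (1 < q)%N.
  apply/card_gt1P; exists 0%R, 1%R; split => //; rewrite eq_sym; exact: oner_neq0.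
set A := [set s : K | s != 0%R].
pose fn := fun p : K * 'rV[K]_d.+1 => (p.1 *: p.2)%R.
set S := fn @: setX A E0.
have inj : {in setX A E0 &, injective fn}.
  move=> [s x] [s' x']; rewrite !in_setX /= !inE => /andP [s0 xE] /andP [s'0 x'E].
  rewrite /fn /= => e.
  have xx : x = x'.
    apply: (dir x' x (s' / s)%R) => //; first by rewrite mulf_neq0 ?invr_eq0.
    by rewrite mulrC -scalerA -e scalerA mulVf // scale1r.
  subst x'; congr (_, _).
  apply/eqP; rewrite -subr_eq0; move/eqP: e; rewrite -subr_eq0 -scalerBl scaler_eq0.
  by rewrite (negbTE (nz x xE)) orbF.
have cardA : #|A| = q.-1.
  rewrite /q -(cardC1 (0%R : K)); apply: eq_card => s; by rewrite !inE.
have cardS : #|S| = (q.-1 * #|E0|)%N by rewrite card_in_imset // cardsX cardA.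
have sumS : (\sum_(v in S) Qc F v = q.-1 * \sum_(x in E0) Qc F x)%N.
  rewrite big_imset //=.
  rewrite (eq_bigr (fun p => Qc F p.2)); last first.
    by move=> [s x]; rewrite in_setX /= inE => /andP [s0 _]; rewrite /fn Q_scale.
  rewrite (eq_bigl (fun p => (p.1 \in A) && (p.2 \in E0))); last by move=> [s x]; rewrite in_setX.
  rewrite -(pair_big_dep (fun s => s \in A) (fun _ x => x \in E0) (fun _ x => Qc F x)) /=.
  by rewrite sum_nat_const cardA.
have qS : q = q.-1.+1 by rewrite prednK // ltnW.
have f0 : (0 < #|F|)%N.
  have : (0 < #|E0| * #|F|)%N by apply: leq_trans big; rewrite expn_gt0 ltnW.
  by rewrite muln_gt0 => /andP [].
have fS : #|F| = (#|F|.-1).+1 by rewrite prednK.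
have hcard : #|{: 'rV[K]_d.+1}| = (q * q ^ d)%N.
  by have := card_mx K 1 d.+1; rewrite mul1n expnS.
rewrite qS; apply: (@arith q.-1 (q ^ d) (#|F|.-1) #|E0| (\sum_(x in E0) Qc F x)
   (\sum_(v | v \notin S) Qc F v) #|prodset E0 F| #|~: S|).
- by rewrite -ltnS -qS.
- by rewrite expn_gt0 ltnW.
- rewrite -fS -qS -expnS -sumQ -sumS (bigID (mem S)) /=; done.
- rewrite -fS -qS big_distrr /=.
  rewrite (eq_bigl (fun v => v \in ~: S)); last by move=> v; rewrite inE.
  rewrite -sum_nat_const; apply: leq_sum => v _; exact: Q_ge.
- by rewrite -cardS -qS -hcard addnC cardsC.
- rewrite -fS big_distrr /= -sum_nat_const; apply: leq_sum => x xE.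
  apply: Q_geP => y yF; rewrite /prodset; exact: imset2_f.
- by rewrite -fS -qS -expnS.
Qed.


Lemma subset_card (T : finType) (A : {set T}) k : (k <= #|A|)%N ->
  exists B : {set T}, B \subset A /\ #|B| = k.
Proof.
move=> hk; exists [set x in take k (enum A)]; split.
  by apply/subsetP => x; rewrite inE => /mem_take; rewrite mem_enum.
rewrite cardsE; move/card_uniqP: (take_uniq k (enum_uniq (mem A))) => ->.
by rewrite size_take -cardE; case: ltngtP hk.
Qed.

Section Lines.
Variable K : finFieldType.
Variable d : nat.
Local Open Scope ring_scope.
Implicit Types x y : 'rV[K]_d.

Lemma linexZ s x : s != 0 -> linex (s *: x) = linex x.
Proof.
move=> s0; apply/setP => v; apply/imsetP/imsetP => [[t]|[t]]; rewrite inE => t0 ->.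
  by exists (t * s); rewrite ?inE ?mulf_neq0 // scalerA.
exists (t / s); first by rewrite inE mulf_neq0 ?invr_eq0.
by rewrite scalerA mulfVK.
Qed.

Lemma linex_self x : x \in linex x.
Proof. by apply/imsetP; exists 1; rewrite ?inE ?oner_neq0 ?scale1r. Qed.

Lemma linex_mem x y : y \in linex x -> linex y = linex x.
Proof. by case/imsetP => s; rewrite inE => s0 ->; rewrite linexZ. Qed.

Lemma select (E : {set 'rV[K]_d}) : exists E1 : {set 'rV[K]_d},
  [/\ E1 \subset E, (forall x, x \in E1 -> x != 0),
      (forall x y s, x \in E1 -> y \in E1 -> s != 0 -> y = s *: x -> y = x) &
      (#|E| <= 1 + \sum_(a in E1) #|E :&: linex a|)%N].
Proof.
set Ez := E :\ 0.
pose r x := odflt x [pick y in Ez | linex y == linex x].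
have hr : forall x, x \in Ez -> r x \in Ez /\ linex (r x) = linex x.
  move=> x xE; rewrite /r; case: pickP => [y /andP [yE /eqP ly]|h] /=.
    by split.
  by move: (h x); rewrite xE eqxx.
exists (r @: Ez); split.
- apply/subsetP => _ /imsetP [x xE ->]; have [h _] := hr x xE.
  by case/setD1P: h.
- move=> _ /imsetP [x xE ->]; have [h _] := hr x xE.
  by case/setD1P: h.
- move=> _ _ s /imsetP [a aE ->] /imsetP [b bE ->] s0 e.
  have [_ la] := hr a aE; have [_ lb] := hr b bE.
  have : linex b = linex a by rewrite -lb e linexZ.
  move=> hab; rewrite /r hab; case: pickP => // h; by move: (h a); rewrite aE eqxx.
- rewrite (cardsD1 (0 : 'rV[K]_d)) -/Ez; apply: leq_add; first by case: (_ \in _).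
  rewrite -(@card_part _ _ Ez (mem (r @: Ez)) r); last by move=> x xE; apply: imset_f.
  apply: leq_sum => a _; apply: subset_leq_card; apply/subsetP => x.
  rewrite !inE => /andP [/andP [xn0 xE] /eqP <-]; rewrite xE /=.
  have xEz : x \in Ez by apply/setD1P.
  have [_ ->] := hr x xEz; exact: linex_self.
Qed.
End Lines.

Local Open Scope R_scope.

Lemma INR_expn (a n : nat) : INR (a ^ n)%N = INR a ^ n.
Proof. elim: n => [|n IH] //=; by rewrite expnS mult_INR IH. Qed.

Lemma nat_floor (X : R) : 2 <= X -> exists n : nat, X - 1 <= INR n <= X.
Proof.
move=> hX; have [h1 h2] := archimed X.
have hz : Z.le 1 (up X).
  apply: le_IZR; lra.
exists (Z.to_nat (up X - 1)).
rewrite INR_IZR_INZ Z2Nat.id; last lia.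
rewrite minus_IZR; lra.
Qed.

Theorem lemma4p2 (d : nat) (C1 : R) :
  (2 <= d)%nat -> 0 < C1 ->
  exists C2 c c' C' : R,
    1 < C2 /\ 0 < c < 1 /\ 0 < c' /\ c' <= C' /\
    forall (K : finFieldType), char_gt2 K ->
    forall (E F : {set 'rV[K]_d}) (beta : R),
      0 <= beta <= 1 ->
      (forall x : 'rV[K]_d, x != 0%R ->
         INR #|E :&: linex x| <= C1 * Rpower (INR #|K|) beta) ->
      INR #|E| * INR #|F| >= C2 * Rpower (INR #|K|) (INR d + beta) ->
      exists E0 : {set 'rV[K]_d},
        E0 \subset E /\
        c' * Rpower (INR #|K|) (- beta) * INR #|E| <= INR #|E0| /\
        INR #|E0| <= C' * Rpower (INR #|K|) (- beta) * INR #|E| /\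
        INR #|prodset E0 F| >= c * INR #|K|.
Proof.
case: d => [//|d] _ hC1.
set M1 := Rmax 1 C1.
have M1a : 1 <= M1 by apply: Rmax_l.
have M1b : C1 <= M1 by apply: Rmax_r.
exists (2 * M1), (1/2), (/ (2 * M1)), 1.
split; first lra.
split; first lra.
split; first (apply: Rinv_0_lt_compat; lra).
split; first (rewrite -Rinv_1; apply: Rinv_le_contravar; lra).
move=> K _ E F beta hb hline hEF.
set qr := INR #|K|.
have q2 : 2 <= qr.
  rewrite /qr (_ : 2 = INR 2) //; apply: le_INR; apply/leP.
  apply/card_gt1P; exists 0%R, 1%R; split => //; rewrite eq_sym; exact: GRing.oner_neq0.
set qb := Rpower qr beta.
have qb1 : 1 <= qb.
  rewrite /qb -(Rpower_O qr); last lra.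
  apply: Rle_Rpower; lra.
have hpow : Rpower qr (INR d.+1 + beta) = qr ^ d.+1 * qb.
  by rewrite Rpower_plus Rpower_pow //; lra.
have hneg : Rpower qr (- beta) = / qb by rewrite Rpower_Ropp.
rewrite hpow in hEF; rewrite hneg.
have qd0 : 0 < qr ^ d.+1 by apply: pow_lt; lra.
have Fle : INR #|F| <= qr ^ d.+1.
  rewrite /qr -INR_expn; apply: le_INR; apply/leP.
  have := card_mx K 1 d.+1; rewrite mul1n => <-; exact: max_card.
have Ege : 2 * M1 * qb <= INR #|E|.
  have hE0 : 0 <= INR #|E| by apply: pos_INR.
  apply: (Rmult_le_reg_r (qr ^ d.+1)) => //.
  have := Rmult_le_compat_l (INR #|E|) _ _ hE0 Fle; nra.
set X := / qb * INR #|E|.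
have qb0 : 0 < qb by lra.
have hX : 2 * M1 <= X.
  rewrite /X; apply: (Rmult_le_reg_l qb) => //.
  have -> : qb * (/ qb * INR #|E|) = INR #|E| by field; lra.
  lra.
have [E1 [sE1 nz1 dir1 cnt]] := select E.
set m := (\max_(a in E1) #|E :&: linex a|)%N.
have msum : (\sum_(a in E1) #|E :&: linex a| <= #|E1| * m)%N.
  rewrite -sum_nat_const; apply: leq_sum => a aE; exact: leq_bigmax_cond.
have mle : INR m <= M1 * qb.
  have : INR m <= C1 * qb.
    case: (posnP #|E1|) => [h|h].
      rewrite /m big_pred0; last by move=> a; rewrite (card0_eq h).
      rewrite /=; apply: Rmult_le_pos; lra.
    rewrite /m; have [a aE ->] := eq_bigmax_cond (fun a => #|E :&: linex a|) h.
    by apply: hline; apply: nz1.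
  nra.
have E1ge : X / (2 * M1) <= INR #|E1|.
  have h1 : INR #|E| <= 1 + INR #|E1| * (M1 * qb).
    apply: Rle_trans (_ : INR (1 + #|E1| * m)%N <= _).
      apply: le_INR; apply/leP; apply: leq_trans cnt _; by rewrite leq_add2l.
    rewrite plus_INR mult_INR /=.
    apply: Rplus_le_compat_l; apply: Rmult_le_compat_l => //; exact: pos_INR.
  rewrite /X; apply: (Rmult_le_reg_r (2 * M1 * qb)); first nra.
  have -> : / qb * INR #|E| / (2 * M1) * (2 * M1 * qb) = INR #|E| by field; lra.
  nra.
have [n [hn1 hn2]] := @nat_floor X ltac:(lra).
pose k := minn n #|E1|.
have [E0 [sE0 cE0]] := @subset_card _ E1 k (geq_minr _ _).
have kge : X / (2 * M1) <= INR k.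
  rewrite /k; case: (leqP n #|E1|) => hk; last lra.
  apply: Rle_trans hn1; apply: (Rmult_le_reg_r (2 * M1)); first lra.
  have -> : X / (2 * M1) * (2 * M1) = X by field; lra.
  nra.
have kle : INR k <= X.
  apply: Rle_trans hn2; apply: le_INR; apply/leP; exact: geq_minl.
exists E0; split; first exact: subset_trans sE0 sE1.
rewrite cE0; split.
  apply: Rle_trans kge; rewrite /X; apply: Req_le; field; lra.
split; first (rewrite Rmult_1_l; exact: kle).
have Pc : (#|K| <= 2 * #|prodset E0 F|)%N.
  apply: core.
  - by move=> x /(subsetP sE0) /nz1.
  - by move=> x y s /(subsetP sE0) hx /(subsetP sE0) hy; apply: dir1.
  - apply/leP; apply: INR_le; rewrite mult_INR INR_expn cE0 -/qr.
    have hF : 0 <= INR #|F| by apply: pos_INR.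
    have : X / (2 * M1) * INR #|F| <= INR k * INR #|F| by nra.
    have -> : X / (2 * M1) * INR #|F| = INR #|E| * INR #|F| / (qb * (2 * M1)).
      rewrite /X; field; lra.
    move=> h; apply: Rle_trans h; apply: (Rmult_le_reg_r (qb * (2 * M1))); first nra.
    have -> : INR #|E| * INR #|F| / (qb * (2 * M1)) * (qb * (2 * M1)) = INR #|E| * INR #|F|.
      field; lra.
    nra.
have := le_INR _ _ (elimT leP Pc); rewrite mult_INR /= -/qr; lra.
Qed.
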